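(* Let $\boldsymbol\mu=(\mu^{(1)},\ldots,\mu^{(n)})$ be an $I$-tuple of partitions, not all zero, where $\mu^{(i)}$ has $m_a^{(i)}$ rows of length $a$. Put $R(\mu^{(i)})=\{(a,u)\mid a>0,\ 1\le u\le m_a^{(i)}\}$, totally ordered lexicographically, and $$P(\boldsymbol\mu)=2\sum_{i\in I}\sum_{\substack{(a,u),(b,v)\in R(\mu^{(i)})\\(a,u)<(b,v)}}\min\{a,b\}-\sum_{i<j}\sum_{\substack{(a,u)\in R(\mu^{(i)})\\(b,v)\in R(\mu^{(j)})}}\min\{|c_{ji}|a,|c_{ij}|b\}.$$ Then $P(\boldsymbol\mu)>-\sum_{i\in I}|\mu^{(i)}|$.
   Context: $(c_{ij})_{i,j\in I}$, $I=\{1,\dots,n\}$, is the Cartan matrix of a complex simple Lie algebra (finite type), with $I$ ordered naturally; $|\mu|$ is the size of a partition $\mu$. *)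

(* Defs.v *)
From HB Require Import structures.
From mathcomp Require Import all_boot all_order all_algebra.
Set Implicit Arguments. Unset Strict Implicit. Unset Printing Implicit Defensive.
Import Order.TTheory GRing.Theory Num.Theory.

(* Generalized Cartan matrix on I = 'I_n (indices 0..n-1, natural order). *)
Definition is_gcm (n : nat) (C : 'M[int]_n) : Prop :=
  (forall i, C i i = 2%R) /\
  (forall i j, i != j -> (C i j <= 0)%R) /\
  (forall i j, (C i j == 0) = (C j i == 0)).

Definition indecomposable (n : nat) (C : 'M[int]_n) : Prop :=
  forall J : {set 'I_n}, J != set0 -> J != setT ->
    exists i j, [/\ i \in J, j \notin J & C i j != 0].

Definition principal_submx (n : nat) (C : 'M[int]_n) (J : {set 'I_n}) :
  'M[int]_#|J| := \matrix_(k, l) C (enum_val k) (enum_val l).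

(* Finite type (Kac, Thm 4.3): all principal minors are positive.  Together
   with indecomposability, these are exactly the Cartan matrices of complex
   simple Lie algebras (with an arbitrary labelling of the nodes). *)
Definition cartan_finite_simple (n : nat) (C : 'M[int]_n) : Prop :=
  [/\ is_gcm C, indecomposable C &
      forall J : {set 'I_n}, (0 < \det (principal_submx C J))%R].

Definition is_partition (s : seq nat) : bool :=
  sorted geq s && all (fun x => 0 < x) s.

Definition psize (s : seq nat) : nat := sumn s.

Definition mult (s : seq nat) (a : nat) : nat := count_mem a s.

Definition Rset (s : seq nat) : seq (nat * nat) :=
  flatten [seq [seq (a, u) | u <- iota 1 (mult s a)] | a <- iota 1 (\max_(x <- s) x)].

Definition lexlt (x y : nat * nat) : bool :=
  (x.1 < y.1) || ((x.1 == y.1) && (x.2 < y.2)).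

Definition Pmu (n : nat) (C : 'M[int]_n) (mu : 'I_n -> seq nat) : int :=
  (2 * (\sum_(i < n) \sum_(x <- Rset (mu i)) \sum_(y <- Rset (mu i) | lexlt x y)
              (minn x.1 y.1)%:R)
   - \sum_(i < n) \sum_(j < n | (i < j)%N) \sum_(x <- Rset (mu i)) \sum_(y <- Rset (mu j))
              (minn ((`|C j i|)%N * x.1) ((`|C i j|)%N * y.1))%:R)%R.

(* Main.v *)
Require Import Defs.
From HB Require Import structures.
From mathcomp Require Import all_boot all_order all_algebra all_fingroup.
From mathcomp Require Import ring lra zify.
Set Implicit Arguments. Unset Strict Implicit. Unset Printing Implicit Defensive.
Import Order.TTheory GRing.Theory Num.Theory.

Section LA.
Local Open Scope ring_scope.
Variable F : realFieldType.

Definition subm n m (M : 'M[F]_n) (f : 'I_m -> 'I_n) : 'M[F]_m :=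
  \matrix_(k, l) M (f k) (f l).

Lemma det_perm_sub p (A : 'M[F]_p) (h : 'I_p -> 'I_p) :
  injective h -> \det (subm A h) = \det A.
Proof.
move=> hi; set s := perm hi.
have -> : subm A h = row_perm s (col_perm s A).
  by apply/matrixP => i j; rewrite !mxE !permE.
rewrite row_permE col_permE !det_mulmx !det_perm odd_permV.
by rewrite mulrCA -signr_addb addbb mulr1.
Qed.

Lemma schur_det m (N : 'M[F]_m.+1) : N 0 0 != 0 ->
  \det N = N 0 0 * \det (\matrix_(i, j) (N (lift 0 i) (lift 0 j)
                 - N (lift 0 i) 0 * N 0 (lift 0 j) / N 0 0)).
Proof.
move=> nz.
pose E : 'M[F]_m.+1 := 1%:M - \matrix_(i, j) (if (j == 0) && (i != 0) then N i 0 / N 0 0 else 0).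
have dE : \det E = 1.
  rewrite det_trig; last first.
    apply/is_trig_mxP => i j lij; rewrite !mxE.
    have -> : (j == 0) = false by apply/negbTE; rewrite -lt0n (leq_ltn_trans _ lij).
    have /negbTE -> : i != j by rewrite -val_eqE /= ltn_eqF.
    by rewrite /= subr0.
  rewrite big1 // => i _; rewrite !mxE eqxx; case: (i == 0); rewrite ?andbF ?andbT ?subr0 //.
have PE : forall i j, (E *m N) i j = N i j - (if i != 0 then N i 0 / N 0 0 * N 0 j else 0).
  move=> i j; rewrite mulmxBl mul1mx !mxE (bigD1 0) //= big1 ?addr0.
    by rewrite !mxE eqxx /=; case: (i != 0); rewrite ?mul0r.
  by move=> k /negbTE nk; rewrite !mxE nk /= mul0r.
rewrite -[\det N]mul1r -dE -det_mulmx (expand_det_col _ 0) big_ord_recl.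
rewrite big1 ?addr0; last first.
  by move=> i _; rewrite PE /= divfK // subrr mul0r.
rewrite PE /= subr0; congr (_ * _).
rewrite /cofactor /= expr0 mul1r; congr (\det _); apply/matrixP => i j.
have := PE (lift 0 i) (lift 0 j); rewrite !mxE => ->; by rewrite /= mulrAC.
Qed.

Definition posminors n (M : 'M[F]_n) :=
  forall m (f : 'I_m -> 'I_n), injective f -> 0 < \det (subm M f).
Definition Zmat n (M : 'M[F]_n) := forall i j, i != j -> M i j <= 0.

Lemma mmatrix n (M : 'M[F]_n) : Zmat M -> posminors M ->
  exists u : 'I_n -> F, (forall i, 0 < u i) /\ (forall i, 0 < \sum_j M i j * u j).
Proof.
elim: n M => [|n IH] M ZM PM.
  by exists (fun _ => 1); split => -[].
set c := M 0 0.
have c0 : 0 < c.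
  have := PM 1 (fun _ => 0) (fun a b _ => etrans (ord1 a) (esym (ord1 b))).
  by rewrite det_mx11 mxE.
pose S := \matrix_(i, j) (M (lift 0 i) (lift 0 j) - M (lift 0 i) 0 * M 0 (lift 0 j) / c).
have ZS : Zmat S.
  move=> i j nij; rewrite mxE.
  have h1 : M (lift 0 i) (lift 0 j) <= 0 by apply: ZM; apply: contra nij => /eqP/lift_inj ->.
  have h2 : M (lift 0 i) 0 <= 0 by apply: ZM; rewrite eq_sym neq_lift.
  have h3 : M 0 (lift 0 j) <= 0 by apply: ZM; rewrite neq_lift.
  have : 0 <= M (lift 0 i) 0 * M 0 (lift 0 j) / c.
    by apply: divr_ge0; [apply: mulr_le0 | apply: ltW].
  lra.
have PS : posminors S.
  move=> m f fi.
  pose f' (k : 'I_m.+1) : 'I_n.+1 := if unlift 0 k is Some k' then lift 0 (f k') else 0.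
  have f'i : injective f'.
    move=> a b; rewrite /f'.
    case: unliftP => [a'|] ->; case: unliftP => [b'|] -> //; first by move/lift_inj/fi ->.
  have e00 : subm M f' 0 0 = c by rewrite mxE /f' unlift_none.
  have -> : subm S f = \matrix_(i, j) (subm M f' (lift 0 i) (lift 0 j) - subm M f' (lift 0 i) 0 * subm M f' 0 (lift 0 j) / subm M f' 0 0).
    by apply/matrixP => i j; rewrite !mxE /f' !liftK unlift_none.
  have := PM _ _ f'i.
  by rewrite schur_det e00 ?gt_eqF // pmulr_rgt0.
have [v [vpos Svpos]] := IH S ZS PS.
set g := fun i => \sum_j S i j * v j.
set w := \sum_j M 0 (lift 0 j) * v j.
set a := fun i => - M (lift 0 i) 0.
have a0 : forall i, 0 <= a i by move=> i; rewrite /a oppr_ge0; apply: ZM; rewrite eq_sym neq_lift.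
have w0 : w <= 0.
  rewrite /w; apply: sumr_le0 => j _; apply: mulr_le0_ge0; last exact: ltW.
  by apply: ZM; rewrite neq_lift.
set x := fun i => a i / (c * g i).
have x0 : forall i, 0 <= x i.
  move=> i; apply: divr_ge0 => //; apply: ltW; apply: mulr_gt0 => //; exact: Svpos.
set X := \sum_i x i.
have xX : forall i, x i <= X.
  move=> i; rewrite /X (bigD1 i) //= lerDl; exact: sumr_ge0.
have X0 : 0 <= X by apply: sumr_ge0.
set d := 1 / (1 + X).
have d0 : 0 < d by apply: divr_gt0 => //; lra.
have dx : forall i, d * x i < 1.
  move=> i; rewrite /d mul1r ltr_pdivrMl ?mulr1; last lra.
  have := xX i; lra.
set t := (d - w) / c.
have t0 : 0 < t by apply: divr_gt0 => //; lra.
exists (fun k => if unlift 0 k is Some k' then v k' else t); split.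
  by move=> k; case: unliftP => [k'|] _ //.
have gE : forall i, g i = \sum_k M (lift 0 i) (lift 0 k) * v k + a i / c * w.
  move=> i; rewrite /g /w /a mulr_sumr -big_split /=; apply: eq_bigr => k _.
  rewrite mxE; field; lra.
move=> k; case: (unliftP 0 k) => [i|] ->; rewrite big_ord_recl unlift_none.
  under eq_bigr do rewrite liftK.
  have gi := Svpos i; rewrite -/(g i) in gi.
  have : a i * d / c < g i.
    have := dx i; rewrite /x => h.
    have cg : 0 < c * g i by apply: mulr_gt0.
    have -> : a i * d / c = g i * (d * (a i / (c * g i))) by field; apply/andP; split; rewrite gt_eqF.
    by rewrite -[X in _ < X]mulr1 ltr_pM2l.
  move=> h; rewrite gE in h; rewrite /t; set Z := \sum_k _.
  have -> : M (lift 0 i) 0 = - a i by rewrite /a opprK.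
  have e : - a i * ((d - w) / c) + Z = Z + a i / c * w - a i * d / c by field; lra.
  rewrite -[\sum_k M (lift 0 i) (lift 0 k) * v k]/Z in h; rewrite e; lra.
under [X in _ < _ + X]eq_bigr do rewrite liftK.
rewrite -/w -/c /t mulrC divfK ?gt_eqF //; lra.
Qed.
End LA.
Lemma sum_lt_min N m : \sum_(k < N) (k < m) = minn m N.
Proof.
elim: N => [|N IH]; first by rewrite big_ord0 minn0.
rewrite big_ord_recr /= IH; case: (ltnP N m) => h; lia.
Qed.

Lemma count_sum (T : Type) (P : pred T) r : count P r = \sum_(x <- r) P x.
Proof. by elim: r => [|x r IH]; rewrite ?big_nil ?big_cons //= IH. Qed.

Lemma idI (T1 T2 : eqType) (A : seq T1) (B : seq T2) f g N :
  (forall x, x \in A -> f x <= N) -> (forall y, y \in B -> g y <= N) ->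
  \sum_(k < N) count (fun x => k < f x) A * count (fun y => k < g y) B
  = \sum_(x <- A) \sum_(y <- B) minn (f x) (g y).
Proof.
move=> hA hB.
rewrite [LHS](eq_bigr (fun k : 'I_N => \sum_(x<-A)\sum_(y<-B) ((k < f x)*(k < g y)))); last first.
  by move=> k _; rewrite !count_sum big_distrl; apply: eq_bigr => x _; rewrite big_distrr.
rewrite exchange_big; apply: eq_big_seq => x xA; rewrite exchange_big.
apply: eq_big_seq => y yB.
under eq_bigr do rewrite mulnb -leq_min.
rewrite sum_lt_min; apply/minn_idPl.
by rewrite geq_min hA.
Qed.

Section CR.
Local Open Scope ring_scope.

Lemma amgm (F : realFieldType) (s a b : F) : 0 < s -> 2 * (a * b) <= s * a ^+ 2 + b ^+ 2 / s.
Proof.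
move=> s0.
have h : 0 <= (s * a - b) ^+ 2 / s by apply: divr_ge0; [apply: sqr_ge0 | apply: ltW].
have e : (s * a - b) ^+ 2 / s = s * a ^+ 2 + b ^+ 2 / s - 2 * (a * b).
  by field; rewrite gt_eqF.
lra.
Qed.

Definition Xs (A : seq (nat * nat)) : nat := \sum_(x <- A) \sum_(y <- A) minn x.1 y.1.

Lemma Tbound (F : realFieldType) (A B : seq (nat*nat)) (p q : nat) (ui uj : F) :
  0 < ui -> 0 < uj -> (0 < p)%N -> (0 < q)%N ->
  2 * (\sum_(x <- A) \sum_(y <- B) minn (q * x.1) (p * y.1))%:R <=
  p%:R * uj / ui * (Xs A)%:R + q%:R * ui / uj * (Xs B)%:R.
Proof.
move=> ui0 uj0 p0 q0.
set N := maxn (\max_(x <- A) q * x.1)%N (\max_(y <- B) p * y.1)%N.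
have hA : forall x, x \in A -> (q * x.1 <= N)%N.
  by move=> x xA; rewrite leq_max (@leq_bigmax_seq _ A xpredT (fun x => (q * x.1)%N) x xA isT).
have hB : forall y, y \in B -> (p * y.1 <= N)%N.
  by move=> y yB; rewrite leq_max (@leq_bigmax_seq _ B xpredT (fun x => (p * x.1)%N) y yB isT) orbT.
rewrite -(idI hA hB).
have eA : (q * Xs A)%N = \sum_(k < N) count (fun x => k < q * x.1)%N A * count (fun x => k < q * x.1)%N A.
  rewrite (idI hA hA) /Xs big_distrr /=; apply: eq_bigr => x _.
  by rewrite big_distrr; apply: eq_bigr => y _; rewrite -[LHS]/(q * minn x.1 y.1)%N minnMr.
have eB : (p * Xs B)%N = \sum_(k < N) count (fun x => k < p * x.1)%N B * count (fun x => k < p * x.1)%N B.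
  rewrite (idI hB hB) /Xs big_distrr /=; apply: eq_bigr => x _.
  by rewrite big_distrr; apply: eq_bigr => y _; rewrite -[LHS]/(p * minn x.1 y.1)%N minnMr.
set s : F := p%:R * uj / (q%:R * ui).
have s0 : 0 < s by rewrite /s divr_gt0 // ?mulr_gt0 // ltr0n.
have -> : p%:R * uj / ui * (Xs A)%:R + q%:R * ui / uj * (Xs B)%:R
   = s * (q * Xs A)%N%:R + (p * Xs B)%N%:R / s.
  rewrite /s !natrM; field.
  by rewrite !gt_eqF ?ltr0n.
rewrite eA eB !natr_sum !mulr_sumr mulr_suml -big_split /=.
apply: ler_sum => k _; rewrite !natrM -!expr2; exact: amgm.
Qed.

End CR.

Lemma trich (x y : nat * nat) : lexlt x y + (x == y) + lexlt y x = 1.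
Proof.
case: x y => [a b] [c d]; rewrite /lexlt /= xpair_eqE.
by case: (ltngtP a c) => h /= //; case: (ltngtP b d).
Qed.

Lemma mulnbE (m : nat) (b : bool) : m * b = if b then m else 0.
Proof. by case: b; rewrite ?muln1 ?muln0. Qed.

Lemma diagE (R : seq (nat * nat)) : uniq R ->
  2 * (\sum_(x <- R) \sum_(y <- R | lexlt x y) minn x.1 y.1) + \sum_(x <- R) x.1 = Xs R.
Proof.
move=> uR.
have e : Xs R = \sum_(x <- R) \sum_(y <- R) minn x.1 y.1 * lexlt x y
     + \sum_(x <- R) \sum_(y <- R) minn x.1 y.1 * (x == y)
     + \sum_(x <- R) \sum_(y <- R) minn x.1 y.1 * lexlt y x.
  rewrite -!big_split /Xs; apply: eq_bigr => x _; rewrite -!big_split /=.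
  by apply: eq_bigr => y _; rewrite -!mulnDr trich muln1.
rewrite e.
have e3 : \sum_(x <- R) \sum_(y <- R) minn x.1 y.1 * lexlt y x
        = \sum_(x <- R) \sum_(y <- R | lexlt x y) minn x.1 y.1.
  rewrite exchange_big /=; apply: eq_big => // x _; rewrite [RHS]big_mkcond /=.
  by apply: eq_big => // y _; rewrite mulnbE minnC.
have e1 : \sum_(x <- R) \sum_(y <- R) minn x.1 y.1 * lexlt x y
        = \sum_(x <- R) \sum_(y <- R | lexlt x y) minn x.1 y.1.
  apply: eq_big => // x _; rewrite [RHS]big_mkcond /=.
  by apply: eq_big => // y _; rewrite mulnbE.
have e2 : \sum_(x <- R) \sum_(y <- R) minn x.1 y.1 * (x == y) = \sum_(x <- R) x.1.
  apply: eq_big_seq => x xR.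
  rewrite (eq_bigr (fun y => x.1 * (x == y))); last first.
    by move=> y _; case: eqP => [->|_]; rewrite ?minnn ?muln0.
  rewrite -big_distrr /= -count_sum.
  have -> : count (fun y => x == y) R = count_mem x R by apply: eq_count => y; rewrite eq_sym.
  by rewrite count_uniq_mem // xR muln1.
rewrite e1 e2 e3; lia.
Qed.

Lemma Rset_uniq s : uniq (Rset s).
Proof.
rewrite /Rset.
change (uniq [seq (a, u) | a <- iota 1 (\max_(x <- s) x), u <- iota 1 (mult s a)]).
apply: allpairs_uniq_dep => //; first exact: iota_uniq.
  by move=> a _; exact: iota_uniq.
by move=> [a u] [b v] _ _ /= [e1 e2]; subst.
Qed.

Lemma sum_count_mem M s : all (fun x => 0 < x <= M) s ->
  \sum_(a <- iota 1 M) count_mem a s * a = sumn s.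
Proof.
move=> hs.
rewrite sumnE.
have -> : \sum_(x <- s) x = \sum_(x <- s) \sum_(a <- iota 1 M) (a == x) * a.
  apply: eq_big_seq => x xs.
  rewrite (eq_bigr (fun a => (a == x) * x)); last by move=> a _; case: eqP => [->|].
  rewrite -big_distrl /= -count_sum.
  have -> : count (fun a => a == x) (iota 1 M) = count_mem x (iota 1 M) by [].
  rewrite count_uniq_mem ?iota_uniq // mem_iota.
  by move/allP: hs => /(_ x xs) /andP[h1 h2]; rewrite h1 /= add1n ltnS h2 mul1n.
rewrite [RHS]exchange_big /=; apply: eq_bigr => a _.
rewrite count_sum big_distrl /=; apply: eq_bigr => x _.
by rewrite eq_sym.
Qed.

Lemma Rset_sum s : all (fun x => 0 < x) s -> \sum_(x <- Rset s) x.1 = psize s.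
Proof.
move=> hs.
rewrite /Rset.
change (\sum_(x <- [seq (a, u) | a <- iota 1 (\max_(x <- s) x), u <- iota 1 (mult s a)]) x.1 = psize s).
rewrite big_allpairs_dep /=.
rewrite (eq_bigr (fun a => count_mem a s * a)); last first.
  by move=> a _; rewrite big_const_seq count_predT size_iota iter_addn_0 mulnC.
rewrite /psize -(@sum_count_mem (\max_(x <- s) x) s) //; apply/allP => x xs.
move/allP: hs => /(_ x xs) -> /=.
exact: (@leq_bigmax_seq _ s xpredT (fun x => x) x xs isT).
Qed.

Lemma psize_gt0 s : all (fun x => 0 < x) s -> s != [::] -> 0 < psize s.
Proof. by case: s => //= x s /andP[h _] _; rewrite /psize /= addn_gt0 h. Qed.

Section Gen.
Local Open Scope ring_scope.
Lemma det_reindex (R : comNzRingType) p m (A : 'M[R]_p) (h : 'I_m -> 'I_p) :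
  injective h -> m = p -> \det (\matrix_(k, l) A (h k) (h l)) = \det A.
Proof.
move=> hi e; subst m; set s := perm hi.
have -> : \matrix_(k, l) A (h k) (h l) = row_perm s (col_perm s A).
  by apply/matrixP => i j; rewrite !mxE !permE.
rewrite row_permE col_permE !det_mulmx !det_perm odd_permV.
by rewrite mulrCA -signr_addb addbb mulr1.
Qed.

Lemma minor_principal n (C : 'M[int]_n) m (f : 'I_m -> 'I_n) :
  injective f ->
  \det (\matrix_(k, l) C (f k) (f l)) = \det (principal_submx C (f @: [set: 'I_m])).
Proof.
move=> fi; set J := f @: [set: 'I_m].
have cJ : #|J| = m by rewrite card_imset // cardsT card_ord.
have fJ : forall k, f k \in J by move=> k; apply: imset_f; rewrite inE.
pose h k : 'I_#|J| := enum_rank_in (fJ k) (f k).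
have hE : forall k, enum_val (h k) = f k by move=> k; rewrite enum_rankK_in.
have hi : injective h by move=> a b e; apply: fi; rewrite -!hE e.
rewrite -(det_reindex (principal_submx C J) hi (esym cJ)); congr (\det _).
by apply/matrixP => k l; rewrite !mxE !hE.
Qed.


End Gen.

Section Fin.
Local Open Scope ring_scope.

Lemma Tbound' (F : realFieldType) (A B : seq (nat*nat)) (p q : nat) (ui uj : F) :
  0 < ui -> 0 < uj -> (p == 0)%N = (q == 0)%N ->
  2 * (\sum_(x <- A) \sum_(y <- B) minn (q * x.1) (p * y.1))%:R <=
  p%:R * uj / ui * (Xs A)%:R + q%:R * ui / uj * (Xs B)%:R.
Proof.
move=> ui0 uj0 e.
case: (posnP p) => [p0|hp].
  have q0 : q = 0%N by apply/eqP; rewrite -e p0.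
  rewrite p0 q0 !mul0r !add0r big1 ?mulr0 // => x _.
  by rewrite big1 // => y _; rewrite !mul0n.
have hq : (0 < q)%N by rewrite lt0n -e -lt0n.
exact: Tbound.
Qed.

Lemma pairs (F : realFieldType) n (G : 'I_n -> 'I_n -> F) :
  \sum_(i < n) \sum_(j < n | (i < j)%N) G i j + \sum_(i < n) \sum_(j < n | (i < j)%N) G j i
  = \sum_(i < n) \sum_(j < n | j != i) G i j.
Proof.
have e2 : \sum_(i < n) \sum_(j < n | (i < j)%N) G j i = \sum_(i < n) \sum_(j < n | (j < i)%N) G i j.
  by rewrite (exchange_big_dep xpredT) //=.
rewrite e2 -big_split /=; apply: eq_bigr => i _.
rewrite [RHS](bigID (fun j : 'I_n => (i < j)%N)) /=; congr (_ + _); apply: eq_bigl => j.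
  case: (ltngtP i j) => h; rewrite ?andbT ?andbF //.
  by rewrite -val_eqE /= (gtn_eqF h).
case: (ltngtP i j) => h; rewrite ?andbT ?andbF //=.
  by rewrite -val_eqE /= (ltn_eqF h).
by rewrite -val_eqE /= h eqxx.
Qed.

Lemma key (F : realFieldType) n (C : 'M[int]_n) (R : 'I_n -> seq (nat*nat)) (u : 'I_n -> F) :
  (forall i, C i i = 2) -> (forall i j, i != j -> C i j <= 0) ->
  (forall i j, (C i j == 0) = (C j i == 0)) ->
  (forall i, 0 < u i) -> (forall i, 0 < \sum_j (C i j)%:~R * u j) ->
  (exists i, (0 < Xs (R i))%N) ->
  (\sum_(i < n) \sum_(j < n | (i < j)%N) \sum_(x <- R i) \sum_(y <- R j)
      minn (`|C j i| * x.1) (`|C i j| * y.1) < \sum_(i < n) Xs (R i))%N.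
Proof.
move=> Cd Coff Csym upos Cu [i0 Xi0].
rewrite -(ltr_nat F) !natr_sum.
set a := fun i j => (`|C i j|%N)%:R * u j / u i * (Xs (R i))%:R : F.
have h1 : 2 * \sum_(i < n) (\sum_(j < n | (i < j)%N) \sum_(x <- R i) \sum_(y <- R j)
      minn (`|C j i| * x.1) (`|C i j| * y.1))%:R <= \sum_(i < n) \sum_(j < n | j != i) a i j.
  rewrite -pairs mulr_sumr -big_split /=; apply: ler_sum => i _.
  rewrite natr_sum mulr_sumr -big_split /=; apply: ler_sum => j _.
  rewrite /a; apply: Tbound' => //.
  by rewrite !absz_eq0 Csym.
have h2 : forall i, \sum_(j < n | j != i) a i j
     = (Xs (R i))%:R / u i * (2 * u i - \sum_j (C i j)%:~R * u j).
  move=> i; rewrite [in RHS](bigD1 i) //= Cd.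
  have -> : \sum_(j < n | j != i) (C i j)%:~R * u j = - \sum_(j < n | j != i) (`|C i j|%N)%:R * u j.
    rewrite -sumrN; apply: eq_bigr => j ji.
    have cle : C i j <= 0 by apply: Coff; rewrite eq_sym.
    have -> : ((`|C i j|%N)%:R : F) = (- C i j)%:~R by rewrite -(lez0_abs cle).
    by rewrite mulrNz mulNr opprK.
  have ui0 : u i != 0 by rewrite gt_eqF.
  rewrite opprD addrA subrr sub0r opprK mulr_sumr; apply: eq_bigr => j _.
  by rewrite /a; field.
have h3 : 0 < \sum_i (Xs (R i))%:R / u i * \sum_j (C i j)%:~R * u j.
  rewrite (bigD1 i0) //=; apply: ltr_pwDl.
    by apply: mulr_gt0 => //; apply: divr_gt0; rewrite ?ltr0n.
  by apply: sumr_ge0 => i _; apply: mulr_ge0; [apply: divr_ge0; [|apply: ltW] | apply: ltW].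
have e : \sum_(i < n) \sum_(j < n | j != i) a i j
   = 2 * \sum_i (Xs (R i))%:R - \sum_i (Xs (R i))%:R / u i * \sum_j (C i j)%:~R * u j.
  rewrite mulr_sumr -sumrB; apply: eq_bigr => i _; rewrite h2.
  have ui0 : u i != 0 by rewrite gt_eqF.
  by field.
rewrite e in h1.
set L := \sum_(i < n) _ in h1 *.
set S := \sum_i _ in h1 h3 *.
lra.
Qed.
End Fin.

Theorem lemmaA4 (n : nat) (C : 'M[int]_n) (mu : 'I_n -> seq nat) :
  cartan_finite_simple C ->
  (forall i, is_partition (mu i)) ->
  (exists i, mu i != [::]) ->
  (- (\sum_(i < n) (psize (mu i))%:R) < Pmu C mu)%R.
Proof.
case=> [[Cd [Coff Csym]] _ Cmin] hpart [i0 hi0].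
pose M : 'M[rat]_n := map_mx intr C.
have ZM : Zmat M by move=> i j nij; rewrite mxE lerz0; apply: Coff.
have PM : posminors M.
  move=> m f fi.
  have -> : subm M f = map_mx intr (\matrix_(k, l) C (f k) (f l)).
    by apply/matrixP => k l; rewrite !mxE.
  by rewrite det_map_mx ltr0z minor_principal.
have [u [upos Cu]] := mmatrix ZM PM.
have Cu' : forall i, (0 < \sum_j (C i j)%:~R * u j)%R.
  by move=> i; have := Cu i; rewrite (eq_bigr (fun j => ((C i j)%:~R * u j)%R)) // => j _; rewrite mxE.
set R := fun i => Rset (mu i).
have allpos : forall i, all (fun x => 0 < x) (mu i) by move=> i; case/andP: (hpart i).
have hX : forall i, Xs (R i) = (2 * (\sum_(x <- R i) \sum_(y <- R i | lexlt x y) minn x.1 y.1) + psize (mu i))%N.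
  by move=> i; rewrite -(diagE (Rset_uniq (mu i))) Rset_sum.
have Xpos : exists i, (0 < Xs (R i))%N.
  by exists i0; rewrite hX; have := psize_gt0 (allpos i0) hi0; lia.
have kk := key Cd Coff Csym upos Cu' Xpos.
set T := (\sum_(i < n) \sum_(j < n | (i < j)%N) _)%N in kk.
set D := (\sum_(i < n) \sum_(x <- R i) \sum_(y <- R i | lexlt x y) minn x.1 y.1)%N.
have PE : Pmu C mu = (2 * D%:R - T%:R)%R.
  rewrite /Pmu /D /T !natr_sum; congr (2 * _ - _)%R; apply: eq_bigr => i _.
    by rewrite natr_sum; apply: eq_bigr => x _; rewrite natr_sum.
  rewrite natr_sum; apply: eq_bigr => j _; rewrite natr_sum; apply: eq_bigr => x _.
  by rewrite natr_sum.
have SX : (\sum_(i < n) Xs (R i) = 2 * D + \sum_(i < n) psize (mu i))%N.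
  rewrite /D big_distrr -big_split /=; exact: eq_bigr => i _.
rewrite SX in kk; rewrite PE -natr_sum !natz; move: kk; set P := (\sum_(i < n) psize (mu i))%N; lia.
Qed.
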